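(* Let $W$ be a unitary $2\times2$ matrix with $\det W=1$ and $\operatorname{tr}W\ge 0$. Then for all unit scalars $\lambda\in\mathbb C$, $\|I-W\|\le\|I-\lambda W\|$.
   Context: $\|\cdot\|$ denotes the operator norm: $\|U\|=\sup\{\|Uv\| : v\in\mathbb C^2,\ \|v\|=1\}$. (For such $W$, $\operatorname{tr}W$ is real.) *)

(* Defs.v *)
From HB Require Import structures.
From mathcomp Require Import all_boot all_order all_algebra.
From mathcomp Require Import complex.
From mathcomp Require Import boolp classical_sets reals.
Set Implicit Arguments. Unset Strict Implicit. Unset Printing Implicit Defensive.
Import Order.TTheory GRing.Theory Num.Theory.
Local Open Scope ring_scope.
Local Open Scope classical_set_scope.

Definition vnorm (R : realType) (v : 'cV[R[i]]_2) : R :=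
  Num.sqrt (\sum_(k < 2) (Normc.normc (v k 0)) ^+ 2).

Definition opnorm (R : realType) (U : 'M[R[i]]_2) : R :=
  sup [set vnorm (U *m v) | v in [set v : 'cV[R[i]]_2 | vnorm v = 1]].

Definition adjmx (R : realType) (U : 'M[R[i]]_2) : 'M[R[i]]_2 :=
  (map_mx Num.conj U)^T.

Definition unitary2 (R : realType) (U : 'M[R[i]]_2) : Prop :=
  U *m adjmx U = 1%:M.

(* Main.v *)
Require Import Defs.
From HB Require Import structures.
From mathcomp Require Import all_boot all_order all_algebra.
From mathcomp Require Import complex.
From mathcomp Require Import boolp classical_sets reals.
From mathcomp Require Import ring lra.
Import Order.TTheory GRing.Theory Num.Theory.
Local Open Scope ring_scope.
Set Implicit Arguments. Unset Strict Implicit. Unset Printing Implicit Defensive.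

Definition nsq (R : realType) (z : R[i]) : R := let: (a +i* b)%C := z in a ^+ 2 + b ^+ 2.
Definition Rep (R : realType) (z : R[i]) : R := let: (a +i* b)%C := z in a.

Lemma normc_sq (R : realType) (z : R[i]) : Normc.normc z ^+ 2 = nsq z.
Proof. case: z => a b; by rewrite /nsq /= sqr_sqrtr // addr_ge0 ?sqr_ge0. Qed.

Lemma nsq_ge0 (R : realType) (z : R[i]) : 0 <= nsq z.
Proof. by case: z => a b; rewrite /nsq addr_ge0 ?sqr_ge0. Qed.

Lemma vnormE (R : realType) (v : 'cV[R[i]]_2) :
  vnorm v = Num.sqrt (nsq (v 0 0) + nsq (v 1 0)).
Proof. rewrite /vnorm !big_ord_recl big_ord0 addr0 !normc_sq.
have -> : lift ord0 ord0 = 1 :> 'I_2 by apply: val_inj.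
by [].
Qed.

Definition Q (R : realType) (l p r x y : R[i]) : R :=
  nsq ((1 - l * p) * x + (0 - l * (- (r^*)%C)) * y) + nsq ((0 - l * r) * x + (1 - l * (p^*)%C) * y).

Lemma MvE (R : realType) (W : 'M[R[i]]_2) l v :
  W 0 1 = - ((W 1 0)^*)%C -> W 1 1 = ((W 0 0)^*)%C ->
  vnorm ((1%:M - l *: W) *m v) = Num.sqrt (Q l (W 0 0) (W 1 0) (v 0 0) (v 1 0)).
Proof.
move=> H01 H11; rewrite vnormE /Q !mxE !big_ord_recl big_ord0 !addr0 !mxE.
have -> : lift ord0 ord0 = 1 :> 'I_2 by apply: val_inj.
rewrite /= H01 H11 big_ord0 addr0.
by [].
Qed.

Lemma L1 (R : realType) (p r x y : R[i]) : nsq p + nsq r = 1 ->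
  Q 1 p r x y = (2 - 2 * Rep p) * (nsq x + nsq y).
Proof.
case: p => p1 p2; case: r => r1 r2; case: x => x1 x2; case: y => y1 y2.
rewrite /Q /nsq; simpc; rewrite /= => H.
apply/eqP; rewrite -subr_eq0; apply/eqP.
transitivity ((p1 ^+ 2 + p2 ^+ 2 + (r1 ^+ 2 + r2 ^+ 2) - 1) * (x1 ^+ 2 + x2 ^+ 2 + (y1 ^+ 2 + y2 ^+ 2))).
  ring.
by rewrite H subrr mul0r.
Qed.

Lemma L2 (R : realType) (l p r x y : R[i]) : nsq l = 1 -> nsq p + nsq r = 1 ->
  Q l p r x y + Q (- l) p r x y = 4 * (nsq x + nsq y).
Proof.
case: l => l1 l2; case: p => p1 p2; case: r => r1 r2; case: x => x1 x2; case: y => y1 y2.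
rewrite /Q /nsq; simpc; rewrite /= => Hl H.
apply/eqP; rewrite -subr_eq0; apply/eqP.
transitivity (2 * (l1 ^+ 2 + l2 ^+ 2) * (p1 ^+ 2 + p2 ^+ 2 + (r1 ^+ 2 + r2 ^+ 2) - 1) * (x1 ^+ 2 + x2 ^+ 2 + (y1 ^+ 2 + y2 ^+ 2))
  + 2 * (l1 ^+ 2 + l2 ^+ 2 - 1) * (x1 ^+ 2 + x2 ^+ 2 + (y1 ^+ 2 + y2 ^+ 2))).
  ring.
by rewrite H Hl !subrr !mulr0 !mul0r addr0.
Qed.

Lemma L3 (R : realType) (l1 l2 p1 p2 r1 r2 : R) :
  l1 ^+ 2 + l2 ^+ 2 = 1 -> p1 ^+ 2 + p2 ^+ 2 + (r1 ^+ 2 + r2 ^+ 2) = 1 ->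
  Q (l1 +i* l2)%C (p1 +i* p2)%C (r1 +i* r2)%C 1 0 = 2 - 2 * (l1 * p1 - l2 * p2).
Proof.
rewrite /Q /nsq; simpc; rewrite /= => Hl H.
apply/eqP; rewrite -subr_eq0; apply/eqP.
transitivity ((l1 ^+ 2 + l2 ^+ 2 - 1) * (p1 ^+ 2 + p2 ^+ 2 + (r1 ^+ 2 + r2 ^+ 2))
  + (p1 ^+ 2 + p2 ^+ 2 + (r1 ^+ 2 + r2 ^+ 2) - 1)).
  ring.
by rewrite H Hl !subrr !mul0r addr0.
Qed.

Lemma L4 (R : realType) (l1 l2 p1 p2 r1 r2 : R) :
  l1 ^+ 2 + l2 ^+ 2 = 1 -> p1 ^+ 2 + p2 ^+ 2 + (r1 ^+ 2 + r2 ^+ 2) = 1 ->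
  Q (l1 +i* l2)%C (p1 +i* p2)%C (r1 +i* r2)%C 0 1 = 2 - 2 * (l1 * p1 + l2 * p2).
Proof.
rewrite /Q /nsq; simpc; rewrite /= => Hl H.
apply/eqP; rewrite -subr_eq0; apply/eqP.
transitivity ((l1 ^+ 2 + l2 ^+ 2 - 1) * (p1 ^+ 2 + p2 ^+ 2 + (r1 ^+ 2 + r2 ^+ 2))
  + (p1 ^+ 2 + p2 ^+ 2 + (r1 ^+ 2 + r2 ^+ 2) - 1)).
  ring.
by rewrite H Hl !subrr !mul0r addr0.
Qed.

Lemma adj2 (R : comNzRingType) (A : 'M[R]_2) : \adj A = \matrix_(i,j) (if (i == 0) && (j == 0) then A 1 1 else if i == 0 then - A 0 1 else if j == 0 then - A 1 0 else A 0 0).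
apply/matrixP=> i j; rewrite !mxE /cofactor.
rewrite (mx11_scalar (row' j _)) det_scalar1 !mxE.
case: i => [[|[|?]] Hi] //; case: j => [[|[|?]] Hj] //=.
- by rewrite expr0 mul1r; congr (A _ _); apply: val_inj.
- by rewrite expr1 mulN1r; congr (- A _ _); apply: val_inj.
- by rewrite expr1 mulN1r; congr (- A _ _); apply: val_inj.
- by rewrite sqrrN expr1n mul1r; congr (A _ _); apply: val_inj.
Qed.

Lemma struct (R : realType) (W : 'M[R[i]]_2) :
  unitary2 W -> \det W = 1 ->
  [/\ W 0 1 = - ((W 1 0)^*)%C, W 1 1 = ((W 0 0)^*)%C & nsq (W 0 0) + nsq (W 1 0) = 1].
Proof.
move=> HU Hdet.
have HA : \adj W = adjmx W.
  by rewrite -[\adj W]mulmx1 -HU mulmxA mul_adj_mx Hdet mul1mx.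
have E00 := congr1 (fun M : 'M_2 => M 0 0) HA.
have E01 := congr1 (fun M : 'M_2 => M 0 1) HA.
rewrite adj2 !mxE /= in E00 E01.
have H01 : W 0 1 = - ((W 1 0)^*)%C by rewrite -(opprK (W 0 1)); congr (- _); exact: E01.
split => //.
have := congr1 (fun M : 'M_2 => M 0 0) HU.
rewrite !mxE !big_ord_recl big_ord0 addr0 !mxE.
have -> : lift ord0 ord0 = 1 :> 'I_2 by apply: val_inj.
rewrite /= H01.
case: (W 0 0) => p1 p2; case: (W 1 0) => r1 r2.
rewrite /nsq; simpc; rewrite /=.
move/(congr1 (@Rep R)) => /= <-.
ring.
Qed.

Lemma sqrt_eq1 (R : realType) (s : R) : 0 <= s -> Num.sqrt s = 1 -> s = 1.
Proof. by move=> hs h; rewrite -(sqr_sqrtr hs) h expr1n. Qed.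

Lemma Q_ge0 (R : realType) (l p r x y : R[i]) : 0 <= Q l p r x y.
Proof. by rewrite /Q addr_ge0 ?nsq_ge0. Qed.

Definition ev (R : realType) (k : 'I_2) : 'cV[R[i]]_2 := \col_(i < 2) (if i == k then 1 else 0).

Lemma ev_unit (R : realType) k : vnorm (ev R k) = 1.
Proof.
rewrite vnormE !mxE.
case: k => [[|[|?]] Hk] //=.
all: by rewrite expr1n !expr0n /= !addr0 ?add0r sqrtr1.
Qed.

Theorem lemma7p17 (R : realType) (W : 'M[R[i]]_2) :
  unitary2 W -> \det W = 1 -> 0 <= \tr W ->
  forall lambda : R[i], `|lambda| = 1 ->
    opnorm (1%:M - W) <= opnorm (1%:M - lambda *: W).
Proof.
move=> HU Hdet Htr l Hl.
have [H01 H11 HP] := struct HU Hdet.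
have Etr : \tr W = W 0 0 + ((W 0 0)^*)%C.
  rewrite /mxtrace !big_ord_recl big_ord0 addr0 -H11.
  by have -> : lift ord0 ord0 = 1 :> 'I_2 by apply: val_inj.
rewrite Etr in Htr.
have Hunit : forall v : 'cV[R[i]]_2, vnorm v = 1 -> nsq (v 0 0) + nsq (v 1 0) = 1.
  by move=> v; rewrite vnormE; apply: sqrt_eq1; rewrite addr_ge0 ?nsq_ge0.
move: HP Htr H01 H11 Hunit.
case Ep: (W 0 0) => [p1 p2]; case Er: (W 1 0) => [r1 r2] HP Htr H01 H11 Hunit.
have Hp1 : 0 <= p1.
  move: Htr; rewrite lecE => /andP[_]; rewrite /=; lra.
move: Hl; rewrite normc_def; case El: l => [l1 l2] /= Hl.
have Hl' : l1 ^+ 2 + l2 ^+ 2 = 1.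
  apply: sqrt_eq1; first by rewrite addr_ge0 ?sqr_ge0.
  by move: Hl => /(congr1 (@Rep R)).
subst l.
have HPr : p1 ^+ 2 + p2 ^+ 2 + (r1 ^+ 2 + r2 ^+ 2) = 1 by exact: HP.
have LHS : opnorm (1%:M - W) <= Num.sqrt (2 - 2 * p1).
  rewrite -{1}(scale1r W).
  apply: ge_sup.
    by exists (vnorm ((1%:M - 1 *: W) *m ev R 0)), (ev R 0); [exact: ev_unit|].
  move=> _ [v Hv <-]; rewrite MvE // ?Ep ?Er // L1.
    by rewrite Hunit // mulr1.
  exact: HP.
apply: (le_trans LHS).
have Hub : has_ubound [set vnorm ((1%:M - (l1 +i* l2)%C *: W) *m v) | v in [set v | vnorm v = 1]].
  exists 2 => _ [v Hv <-]; rewrite MvE // ?Ep ?Er //.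
  have H4 : Q (l1 +i* l2)%C (p1 +i* p2)%C (r1 +i* r2)%C (v 0 0) (v 1 0) <= 2 ^+ 2.
    have := @L2 R (l1 +i* l2)%C (p1 +i* p2)%C (r1 +i* r2)%C (v 0 0) (v 1 0) Hl' HP.
    rewrite Hunit // mulr1 => E.
    have := @Q_ge0 R (- (l1 +i* l2)%C) (p1 +i* p2)%C (r1 +i* r2)%C (v 0 0) (v 1 0).
    lra.
  by rewrite -(@ger0_norm _ 2) // -sqrtr_sqr ler_wsqrtr.
have Hsup := ub_le_sup Hub.
have [Hc|Hc] := lerP (l2 * p2) 0.
- apply: le_trans (Hsup _ _); last by exists (ev R 1) => //; exact: ev_unit.
  rewrite MvE // ?Ep ?Er // !mxE /= L4 //.
  apply: ler_wsqrtr.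
  have h1 : l1 <= 1 by nra.
  nra.
- apply: le_trans (Hsup _ _); last by exists (ev R 0) => //; exact: ev_unit.
  rewrite MvE // ?Ep ?Er // !mxE /= L3 //.
  apply: ler_wsqrtr.
  have h1 : l1 <= 1 by nra.
  nra.
Qed.
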